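(* For an integer $n\ge 4$, let $f(n)$ be the minimum number of edges of a finite simple edge-pancyclic graph of order $n$ having at least one edge. Then $$\frac{3n}{2}\le f(n)\le 2n-2 .$$
   Context: A $k$-cycle is a cycle of length $k$. A graph $G$ of order $n$ is edge-pancyclic if for every integer $k$ with $3\le k\le n$, every edge of $G$ lies in a $k$-cycle. Edgeless graphs, which are vacuously edge-pancyclic, are excluded. *)

(* Defs.v *)
From mathcomp Require Import all_boot.
Set Implicit Arguments. Unset Strict Implicit. Unset Printing Implicit Defensive.

Definition simple_graph (T : finType) (e : rel T) : Prop :=
  symmetric e /\ irreflexive e.

Definition edge_set (T : finType) (e : rel T) : {set {set T}} :=
  [set x : {set T} | [exists u, exists v, e u v && (x == [set u; v])]].

Definition num_edges (T : finType) (e : rel T) : nat := #|edge_set e|.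

Definition edge_in_k_cycle (T : finType) (e : rel T) (k : nat) (u v : T) : Prop :=
  exists s : seq T,
    [/\ size s = k, uniq s, cycle e s, u \in s & (next s u == v) || (next s v == u)].

Definition edge_pancyclic (T : finType) (e : rel T) : Prop :=
  forall k, 3 <= k <= #|T| -> forall u v, e u v -> edge_in_k_cycle e k u v.

(* Main.v *)
Require Import Defs.
From mathcomp Require Import all_boot zify.
Set Implicit Arguments. Unset Strict Implicit. Unset Printing Implicit Defensive.

Section Cyc.
Variable T : eqType.

Lemma next_nth_uniq (r : seq T) x0 i : uniq r -> i.+1 < size r ->
  next r (nth x0 r i) = nth x0 r i.+1.
Proof.
move=> Ur lt.
have ir : nth x0 r i \in r by apply: mem_nth; lia.
rewrite next_nth ir.
case: r Ur lt ir => [//|y r'] Ur lt ir.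
rewrite index_uniq //; last by rewrite /= in lt *; lia.
rewrite /=; apply: set_nth_default; rewrite /= in lt; lia.
Qed.

Lemma next23_neq (r : seq T) y : uniq r -> y \in r -> 3 <= size r ->
  next r (next r y) != y /\ (4 <= size r -> next r (next r (next r y)) != y).
Proof.
move=> Ur yr sz.
case: (rot_to yr) => i s E.
have Ur' : uniq (y :: s) by rewrite -E rot_uniq.
have sz' : 3 <= size (y :: s) by rewrite -E size_rot.
rewrite -!(next_rot i Ur) E -(size_rot i) E.
have H1 : next (y::s) y = nth y (y::s) 1 := @next_nth_uniq (y::s) y 0 Ur' (ltnW sz').
have H2 : next (y::s) (nth y (y::s) 1) = nth y (y::s) 2 := @next_nth_uniq (y::s) y 1 Ur' sz'.
rewrite H1 H2; split.
  change (nth y (y::s) 2 != nth y (y::s) 0).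
  by rewrite nth_uniq.
move=> sz4.
have H3 : next (y::s) (nth y (y::s) 2) = nth y (y::s) 3 := @next_nth_uniq (y::s) y 2 Ur' sz4.
rewrite H3.
change (nth y (y::s) 3 != nth y (y::s) 0).
by rewrite nth_uniq.
Qed.
End Cyc.

Section Lower.
Variables (T : finType) (e : rel T).
Hypothesis (He : simple_graph e).
Hypothesis (Hn : 4 <= #|T|).
Hypothesis (Hp : edge_pancyclic e).

Lemma full_in (s : seq T) x : size s = #|T| -> uniq s -> x \in s.
Proof.
move=> sz Us; apply/negPn/negP => xs.
have U' : uniq (x :: s) by rewrite /= xs.
move/card_uniqP: U' => /=; rewrite sz => H.
have := max_card (mem (x :: s)); rewrite H; lia.
Qed.

Lemma sym_e : symmetric e. Proof. by case: He. Qed.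
Lemma irr_e x : e x x = false. Proof. by case: He => _ ->. Qed.

Lemma tri (t : seq T) x : size t = 3 -> uniq t -> cycle e t -> x \in t ->
  exists p q, [/\ p != q, e x p, e x q & e p q].
Proof.
case: t => [|t1 [|t2 [|t3 [|]]]] //= _.
rewrite !inE !andbT negb_or => /andP[/andP[n12 n13] n23] /and3P[e12 e23 e31].
move=> /or3P[] /eqP ->.
- by exists t2, t3; rewrite n23 e12 e23 sym_e e31.
- by exists t3, t1; rewrite e23 sym_e e12 e31; split => //; rewrite eq_sym.
- by exists t1, t2; rewrite n12 e31 e12 sym_e e23.
Qed.

Lemma deg3 x : (exists u v, e u v) ->
  exists a b c, [/\ e x a, e x b, e x c & [&& a != b, a != c & b != c]].
Proof.
move=> [u [v euv]].
have H4 : 3 <= #|T| <= #|T| by rewrite leqnn andbT (ltnW Hn).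
have [r [sz Ur cr ur _]] := Hp H4 euv.
have xr : x \in r := full_in x sz Ur.
have sr : 3 <= size r by rewrite sz (ltnW Hn).
pose a := next r x; pose b := prev r x.
have exa : e x a by apply: next_cycle.
have exb : e x b by rewrite sym_e; apply: prev_cycle.
have nab : a != b.
  apply/eqP => eab.
  have [h _] := next23_neq Ur xr sr.
  by move: h; rewrite -/a eab /b next_prev // eqxx.
case: (boolP [exists c, [&& e x c, c != a & c != b]]).
  move=> /existsP[c /and3P[exc nca ncb]].
  by exists a, b, c; split => //; rewrite nab eq_sym nca eq_sym ncb.
rewrite negb_exists => /forallP Hc.
have Nx : forall c, e x c -> c = a \/ c = b.
  move=> c exc; move: (Hc c); rewrite exc /=.
  by case: eqP => [->|_]; [left | case: eqP => [->|]; [right|]].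
have H3 : 3 <= 3 <= #|T| by rewrite (ltnW Hn).
have [t [szt Ut ct xt _]] := Hp H3 exa.
have [p [q [npq exp exq epq]]] := tri szt Ut ct xt.
have eab : e a b.
  case: (Nx p exp) => Ep; case: (Nx q exq) => Eq1; subst p q => //.
  - by rewrite eqxx in npq.
  - by rewrite sym_e.
  - by rewrite eqxx in npq.
have [s [szs Us cs as0 Hns]] := Hp H4 eab.
have xs : x \in s := full_in x szs Us.
have ss : 3 <= size s by rewrite szs (ltnW Hn).
have s4 : 4 <= size s by rewrite szs; exact: Hn.
have [h2 h3] := next23_neq Us xs ss.
have exn : e x (next s x) by apply: next_cycle.
have exp' : e x (prev s x) by rewrite sym_e; apply: prev_cycle.
have nnp : next s x != prev s x.
  by apply/eqP => E; move: h2; rewrite E next_prev // eqxx.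
have xna : x != a by apply/eqP => E; move: exa; rewrite -E irr_e.
have xnb : x != b by apply/eqP => E; move: exb; rewrite -E irr_e.
case: (Nx _ exn) => En; case: (Nx _ exp') => Ep; rewrite ?En ?Ep ?eqxx // in nnp.
-
  have nb : next s b = x by rewrite -Ep next_prev.
  case/orP: Hns => /eqP Hn'.
  + by move: (h3 s4); rewrite En Hn' nb eqxx.
  + by move: xna; rewrite -nb Hn' eqxx.
- have na : next s a = x by rewrite -Ep next_prev.
  case/orP: Hns => /eqP Hn'.
  + by move: xnb; rewrite -na Hn' eqxx.
  + by move: (h3 s4); rewrite En Hn' na eqxx.
Qed.


Lemma ES_card E : E \in edge_set e -> #|E| = 2.
Proof.
rewrite inE => /existsP[u /existsP[v /andP[euv /eqP ->]]].
rewrite cards2.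
have -> : u != v by apply/eqP => E'; rewrite E' irr_e in euv.
by [].
Qed.

Lemma edge_in x a : e x a -> [set x; a] \in edge_set e.
Proof.
move=> exa; rewrite inE; apply/existsP; exists x; apply/existsP; exists a.
by rewrite exa eqxx.
Qed.

Lemma set2_neq (x a b : T) : a != b -> x != a -> [set x; a] != [set x; b].
Proof.
move=> nab nxa; apply/eqP => E.
have : a \in [set x; a] by rewrite set22.
rewrite E in_set2 => /orP[]/eqP E'.
- by rewrite E' eqxx in nxa.
- by rewrite E' eqxx in nab.
Qed.

Lemma lower : (exists u v, e u v) -> 3 * #|T| <= 2 * num_edges e.
Proof.
move=> ex.
have step1 : 2 * num_edges e = \sum_(E in edge_set e) \sum_x (x \in E : nat).
  rewrite /num_edges mulnC -sum_nat_const.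
  apply: eq_bigr => E HE.
  by rewrite -(ES_card HE) -sum1_card big_mkcond.
rewrite step1 exchange_big /=.
have -> : 3 * #|T| = \sum_(x : T) 3 by rewrite sum_nat_const mulnC.
apply: leq_sum => x _.
have [a [b [c [exa exb exc /and3P[nab nac nbc]]]]] := deg3 x ex.
have nxa : x != a by apply/eqP => E; rewrite E irr_e in exa.
have nxb : x != b by apply/eqP => E; rewrite E irr_e in exb.
have nxc : x != c by apply/eqP => E; rewrite E irr_e in exc.
pose l := [:: [set x; a]; [set x; b]; [set x; c]].
have Ul : uniq l.
  rewrite /l /= !inE !negb_or !set2_neq //.
have -> : \sum_(E in edge_set e) (x \in E : nat) = #|[set E in edge_set e | x \in E]|.
  rewrite -sum1_card.
  rewrite [RHS](eq_bigl (fun E => (E \in edge_set e) && (x \in E))); last first.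
    by move=> E; rewrite inE.
  rewrite big_mkcondr /=.
  by apply: eq_bigr => E _; case: (x \in E).
have -> : 3 = #|l| by rewrite (card_uniqP Ul).
apply: subset_leq_card; apply/subsetP => E.
rewrite /l !inE => /or3P[] /eqP ->; rewrite set21 andbT.
- by have := edge_in exa; rewrite inE.
- by have := edge_in exb; rewrite inE.
- by have := edge_in exc; rewrite inE.
Qed.

End Lower.

Definition adj (m x y : nat) : bool :=
  (x != y) && [|| x == 0, y == 0, y == (x %% m).+1 | x == (y %% m).+1].
Definition wheel m : rel 'I_m.+1 := fun x y => adj m x y.
Arguments wheel m : clear implicits.
Definition gpos m p i := ((p + i) %% m).+1.
Definition wlist m p k := 0 :: map (gpos m p) (iota 0 k.-1).

Section W.
Variables (m p : nat).
Hypotheses (Hm : 2 <= m) (Hpm : p < m).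

Lemma adj_gS i : adj m (gpos m p i) (gpos m p i.+1).
Proof.
rewrite /adj /gpos.
have E : (p + i.+1) %% m = ((p + i) %% m).+1 %% m.
  by rewrite -[in RHS]addn1 modnDml addnS addn1.
rewrite E; set a := (p + i) %% m.
have am : a < m by rewrite ltn_pmod //; lia.
rewrite eqxx !orbT andbT.
case: (ltngtP a.+1 m) => h.
- by rewrite modn_small //; lia.
- lia.
- by rewrite h modnn; lia.
Qed.

Lemma path_g a len : path (adj m) (gpos m p a) (map (gpos m p) (iota a.+1 len)).
Proof.
elim: len a => [//|len IH] a /=.
by rewrite adj_gS IH.
Qed.

Lemma wlist_cycle k : 3 <= k -> cycle (adj m) (wlist m p k).
Proof.
move=> Hk; rewrite /wlist.
case Ek: k.-1 => [|l]; first lia.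
rewrite /= rcons_path last_map path_g.
by rewrite /adj /gpos.
Qed.

Lemma wlist_uniq k : k <= m.+1 -> uniq (wlist m p k).
Proof.
move=> Hk; rewrite /wlist /=.
apply/andP; split.
  by apply/mapP => [[i _]]; rewrite /gpos.
rewrite map_inj_in_uniq ?iota_uniq // => i j.
rewrite !mem_iota /gpos => /andP[_ hi] /andP[_ hj] [] /eqP.
rewrite eqn_modDl !modn_small; [by move/eqP| lia | lia].
Qed.

Lemma wlist_size k : 1 <= k -> size (wlist m p k) = k.
Proof. by move=> Hk; rewrite /= size_map size_iota; lia. Qed.

Lemma wlist_le k : all (fun x => x < m.+1) (wlist m p k).
Proof.
rewrite /wlist /=; apply/allP => x /mapP[i _ ->].
by rewrite /gpos ltnS ltn_pmod //; lia.
Qed.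

Lemma wlist_next k : 3 <= k <= m.+1 ->
  next (wlist m p k) 0 = gpos m p 0 /\ next (wlist m p k) (gpos m p 0) = gpos m p 1.
Proof.
case/andP=> Hk Hkm.
have Uw := wlist_uniq Hkm.
have sz := @wlist_size k (ltnW (ltnW Hk)).
have N j : j.+1 < k -> next (wlist m p k) (nth 0 (wlist m p k) j) = nth 0 (wlist m p k) j.+1.
  by move=> hj; apply: next_nth_uniq; rewrite ?sz.
case: k Hk Hkm Uw sz N => [|[|[|l]]] // _ _ _ _ N.
split; [exact: (N 0 isT) | exact: (N 1 isT)].
Qed.

Lemma gpos0 : gpos m p 0 = p.+1.
Proof. by rewrite /gpos addn0 modn_small. Qed.


Lemma wheel_cyc k (a b : 'I_m.+1) : 3 <= k <= m.+1 ->
  ((val a = 0 /\ val b = p.+1) \/ (val a = p.+1 /\ val b = gpos m p 1)) ->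
  edge_in_k_cycle (wheel m) k a b /\ edge_in_k_cycle (wheel m) k b a.
Proof.
move=> Hk Hab.
pose s := map (fun j => @inord m j) (wlist m p k).
have Ms : map val s = wlist m p k.
  rewrite -map_comp; apply: map_id_in => x xw /=; apply: inordK.
  by move/allP: (wlist_le k) => /(_ x xw).
have Us : uniq s by rewrite -(map_inj_uniq val_inj) Ms wlist_uniq //; case/andP: Hk.
have Ss : size s = k by rewrite size_map wlist_size //; case/andP: Hk => h _; lia.
have Cs : cycle (wheel m) s.
  have -> : wheel m = relpre val (adj m) by [].
  by rewrite -cycle_map Ms wlist_cycle //; case/andP: Hk.
have [N0 N1] := wlist_next Hk.
have Nv x : val (next s x) = next (wlist m p k) (val x) by rewrite -Ms (next_map val_inj Us).
have Mem x : (x \in s) = (val x \in wlist m p k) by rewrite -Ms mem_map //; exact: val_inj.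
have [ain bin nab] : [/\ a \in s, b \in s & next s a == b].
  case: Hab => [[ha hb]|[ha hb]].
  - rewrite !Mem ha hb; split.
    + by rewrite inE eqxx.
    + by rewrite -gpos0 -N0 mem_next inE eqxx.
    + by apply/eqP/val_inj; rewrite Nv ha N0 gpos0 hb.
  - rewrite !Mem ha hb; split.
    + by rewrite -gpos0 -N0 mem_next inE eqxx.
    + by rewrite -N1 mem_next -N0 mem_next inE eqxx.
    + by apply/eqP/val_inj; rewrite Nv ha -gpos0 N1 hb.
by split; exists s; split => //; rewrite nab ?orbT.
Qed.

End W.

Theorem theorem4 (n : nat) : 4 <= n ->
  (forall (T : finType) (e : rel T),
      #|T| = n -> simple_graph e -> 0 < num_edges e -> edge_pancyclic e ->
      3 * n <= 2 * num_edges e) /\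
  (exists e : rel 'I_n,
      [/\ simple_graph e, 0 < num_edges e, edge_pancyclic e &
          num_edges e <= 2 * n - 2]).
Proof.
move=> Hn; split.
  move=> T e HT He Hne Hp; rewrite -HT.
  have Hn' : 4 <= #|T| by rewrite HT.
  apply: (lower He Hn' Hp).
  move/card_gt0P: Hne => [E]; rewrite inE => /existsP[u /existsP[v /andP[euv _]]].
  by exists u, v.
case: n Hn => [|m] // Hn.
have Hm : 2 <= m by lia.
exists (wheel m); split.
- split.
  + move=> x y; rewrite /wheel /adj eq_sym.
    by case: (val y == val x); case: (val x == 0); case: (val y == 0);
       case: (val y == _); case: (val x == _).
  + by move=> x; rewrite /wheel /adj eqxx.
- apply/card_gt0P; exists [set ord0; inord 1].
  rewrite inE; apply/existsP; exists ord0; apply/existsP; exists (inord 1).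
  by rewrite eqxx andbT /wheel /adj /= inordK //; lia.
- move=> k /andP[k3 km] u v huv; rewrite card_ord in km.
  have Hk : 3 <= k <= m.+1 by rewrite k3 km.
  have uo := ltn_ord u; have vo := ltn_ord v.
  move: huv; rewrite /wheel /adj => /andP[nuv].
  case: (boolP (nat_of_ord u == 0)) => [/eqP u0 _ | u0].
    have Hpm : (nat_of_ord v).-1 < m.
      have : nat_of_ord v != 0 by rewrite -u0 eq_sym.
      rewrite -lt0n => h; rewrite -ltnS prednK //.
    apply: (proj1 (@wheel_cyc m _ Hm Hpm k u v Hk _)); left; split => //.
    by rewrite prednK // lt0n -u0 eq_sym.
  case: (boolP (nat_of_ord v == 0)) => [/eqP v0 _ | v0].
    have Hpm : (nat_of_ord u).-1 < m by rewrite -ltnS prednK // lt0n.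
    apply: (proj2 (@wheel_cyc m _ Hm Hpm k v u Hk _)); left; split => //.
    by rewrite prednK // lt0n.
  rewrite /= => /orP[] /eqP E.
    have Hpm : (nat_of_ord u).-1 < m by rewrite -ltnS prednK // lt0n.
    apply: (proj1 (@wheel_cyc m _ Hm Hpm k u v Hk _)); right; split.
      by rewrite prednK // lt0n.
    by rewrite -[val v]/(nat_of_ord v) E /gpos addn1 prednK // lt0n.
  have Hpm : (nat_of_ord v).-1 < m by rewrite -ltnS prednK // lt0n.
  apply: (proj2 (@wheel_cyc m _ Hm Hpm k v u Hk _)); right; split.
    by rewrite prednK // lt0n.
  by rewrite -[val u]/(nat_of_ord u) E /gpos addn1 prednK // lt0n.
- rewrite /num_edges.
  pose F := fun x : 'I_m.+1 * bool =>
    if x.2 then [set ord0; x.1] else [set x.1; inord ((x.1 %% m).+1)].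
  pose D := setX [set~ (ord0 : 'I_m.+1)] [set: bool].
  have sub : edge_set (wheel m) \subset F @: D.
    apply/subsetP => E; rewrite inE => /existsP[u /existsP[v /andP[huv /eqP ->]]].
    have uo := ltn_ord u; have vo := ltn_ord v.
    move: huv; rewrite /wheel /adj => /andP[nuv].
    case: (boolP (nat_of_ord u == 0)) => [u0 _ | u0].
      have -> : u = ord0 by apply/val_inj/eqP.
      apply/imsetP; exists (v, true) => //.
      rewrite in_setX !inE andbT; apply/eqP => E'.
      by move: nuv; rewrite E' (eqP u0) eqxx.
    case: (boolP (nat_of_ord v == 0)) => [v0 _ | v0].
      have -> : v = ord0 by apply/val_inj/eqP.
      apply/imsetP; exists (u, true); last by rewrite /F /= setUC.
      rewrite in_setX !inE andbT; apply/eqP => E'.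
      by move: u0; rewrite E' eqxx.
    rewrite /= => /orP[] /eqP Ev.
      apply/imsetP; exists (u, false).
        rewrite in_setX !inE andbT; apply/eqP => E'.
        by move: u0; rewrite E' eqxx.
      rewrite /F /=; congr [set _; _]; apply/val_inj.
      by rewrite /= inordK ?Ev // ltnS ltn_pmod //; lia.
    apply/imsetP; exists (v, false).
      rewrite in_setX !inE andbT; apply/eqP => E'.
      by move: v0; rewrite E' eqxx.
    rewrite /F /= setUC; congr [set _; _]; apply/val_inj.
    by rewrite /= inordK ?Ev // ltnS ltn_pmod //; lia.
  apply: leq_trans (subset_leq_card sub) _.
  apply: leq_trans (leq_imset_card _ _) _.
  rewrite cardsX cardsC1 cardsT card_bool card_ord /=.
  lia.
Qed.
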